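(* Let $\mathsf{F}(X)=X\times X$ (with $\mathsf{F}h=h\times h$) and $\mathsf{B}=\mathcal{P}_{fin}$ the finite covariant powerset functor ($\mathsf{B}h(S)=h[S]$). Then the category $\mathit{Dialg}(\mathsf{F},\mathsf{B})$ has no final object.
   Context: For functors $\mathsf{F},\mathsf{B}:\mathbf{Set}\to\mathbf{Set}$, an $(\mathsf{F},\mathsf{B})$-dialgebra is a pair $(X,f)$ with $X$ a set (the carrier) and $f:\mathsf{F}X\to\mathsf{B}X$ a function. A homomorphism $h:(X,f)\to(Y,g)$ is a function $h:X\to Y$ with $g\circ\mathsf{F}h=\mathsf{B}h\circ f$. Dialgebras and homomorphisms form the category $\mathit{Dialg}(\mathsf{F},\mathsf{B})$. *)

(* Defs.v *)
From Stdlib Require Import List.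
Set Implicit Arguments.

(* Finite subsets of X are represented as predicates S : X -> Prop that are
   enumerated by some list.  P_fin X = { S : X -> Prop | finite_pred S },
   with extensional equality of subsets. *)
Definition finite_pred (X : Type) (S : X -> Prop) : Prop :=
  exists l : list X, forall x, S x <-> In x l.

Record dialg : Type := Dialg {
  carrier : Type;
  str : carrier * carrier -> carrier -> Prop;   (* str p = the subset f(p) *)
  str_fin : forall p, finite_pred (str p)
}.

(* h is a homomorphism: g o (h x h) = P_fin h o f, i.e. for all (x,y),
   g (h x, h y) = h[f (x,y)] as subsets. *)
Definition is_hom (A B : dialg) (h : carrier A -> carrier B) : Prop :=
  forall (x y : carrier A) (b : carrier B),
    str B (h x, h y) b <-> exists a, str A (x, y) a /\ h a = b.

Definition is_final (Z : dialg) : Prop :=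
  forall A : dialg,
    exists h : carrier A -> carrier Z,
      is_hom A Z h /\
      forall h' : carrier A -> carrier Z, is_hom A Z h' -> forall a, h' a = h a.

(* Main.v *)
Require Import Defs.
From Stdlib Require Import List Bool.

Definition E : dialg.
Proof.
  refine (@Dialg unit (fun _ _ => False) _).
  intros p; exists nil; simpl; tauto.
Defined.

Definition strA (p : bool * bool) (a : bool) : Prop := fst p <> snd p /\ a = fst p.

Definition A : dialg.
Proof.
  refine (@Dialg bool strA _).
  intros [x y]; unfold strA; simpl.
  destruct (bool_dec x y) as [e|n].
  - exists nil; simpl; intros a; split; [intros [H _]; contradiction | tauto].
  - exists (x :: nil); simpl; intros a; split.
    + intros [_ ->]; auto.
    + intros [<-|[]]; auto.
Defined.

Theorem mainTheorem2 : ~ (exists Z : dialg, is_final Z).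
Proof.
  intros [Z HZ].
  destruct (HZ E) as [h0 [Hh0 Hu0]].
  destruct (HZ A) as [h [Hh _]].
  assert (Hz : forall z : carrier Z, (forall b, ~ str Z (z, z) b) -> z = h0 tt).
  { intros z Hz.
    apply (Hu0 (fun _ => z)).
    intros x y b; simpl; split.
    - intros H; exfalso; exact (Hz b H).
    - intros [a [[] _]]. }
  assert (Hempty : forall x : bool, forall b, ~ str Z (h x, h x) b).
  { intros x b H. apply Hh in H. destruct H as [a [[Hne _] _]]. apply Hne; reflexivity. }
  assert (E1 : h false = h0 tt) by (apply Hz, Hempty).
  assert (E2 : h true = h0 tt) by (apply Hz, Hempty).
  assert (Hs : str Z (h false, h true) (h false)).
  { apply Hh. exists false. split; [split; [discriminate | reflexivity] | reflexivity]. }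
  rewrite E2 in Hs. rewrite <- E1 in Hs.
  exact (Hempty false _ Hs).
Qed.
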